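(* Let $f_0$ be an arithmetic function, let $m\ge1$ and $n\ge1$. Then $C_m(n)=C_1(n)\,L_n^{m-1}$; explicitly, for $1\le k\le n$, \[c_m(n,k)=\sum_{i=k}^n(m-1)^{i-k}\binom{i-1}{k-1}c_1(n,i).\]
   Context: An arithmetic function is a function $f_0:\{1,2,\ldots\}\to\mathbb{C}$. For $m\ge 1$, $f_m$ is the invert transform of $f_{m-1}$, i.e. $f_m(n)=f_{m-1}(n)+\sum_{i=1}^{n-1}f_{m-1}(i)f_m(n-i)$ for $n\ge1$. For $m\ge1$ the numbers $c_m(n,k)$, $0\le k\le n$, are defined by $c_m(0,0)=1$, $c_m(n,0)=0$ for $n\ge1$, and $c_m(n,k)=\sum_{i=1}^{n-k+1}f_{m-1}(i)\,c_m(n-i,k-1)$ for $1\le k\le n$. $C_m(n)$ is the $n\times n$ lower triangular matrix whose $(r,k)$ entry is $c_m(r,k)$ for $1\le k\le r\le n$ (and $0$ for $k>r$), and $L_n$ is the $n\times n$ lower triangular Pascal matrix whose $(r,k)$ entry is $\binom{r-1}{k-1}$; $L_n^0$ is the identity. The convention $0^0=1$ is used. *)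

(* Defs.v *)
From HB Require Import structures.
From mathcomp Require Import all_boot all_order all_algebra.
Set Implicit Arguments. Unset Strict Implicit. Unset Printing Implicit Defensive.
Import GRing.Theory.
Local Open Scope ring_scope.

(* Arithmetic functions are represented as g : nat -> R; only the values at
   n >= 1 are meaningful (the value at 0 is never used by the definitions). *)

Fixpoint invert_aux (R : comNzRingType) (g : nat -> R) (N n : nat) : R :=
  match N with
  | 0 => 0
  | N'.+1 => g n + \sum_(1 <= i < n) g i * invert_aux g N' (n - i)
  end.

(* The invert transform of g (fuel n suffices for argument n). *)
Definition invert (R : comNzRingType) (g : nat -> R) (n : nat) : R :=
  invert_aux g n n.

Definition fiter (R : comNzRingType) (f0 : nat -> R) (m : nat) : nat -> R :=
  iter m (@invert R) f0.

(* c(n,k) attached to g = f_{m-1}: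
   c(0,0)=1, c(n,0)=0 (n>=1), c(n,k)=sum_{i=1}^{n-k+1} g(i) c(n-i,k-1) for 1<=k<=n.
   (Values with k > n are set to 0; they are never used.) *)
Fixpoint cnum (R : comNzRingType) (g : nat -> R) (n k : nat) : R :=
  match k with
  | 0 => if n == 0%N then 1 else 0
  | k'.+1 => if (k <= n)%N then
               \sum_(1 <= i < (n - k).+2) g i * cnum g (n - i) k'
             else 0
  end.

Definition c_m (R : comNzRingType) (f0 : nat -> R) (m n k : nat) : R :=
  cnum (fiter f0 (m - 1)) n k.

Definition Cmat (R : comNzRingType) (f0 : nat -> R) (m n : nat) : 'M[R]_n :=
  \matrix_(i < n, j < n) (if (j <= i)%N then c_m f0 m i.+1 j.+1 else 0).

Definition Lmat (R : comNzRingType) (n : nat) : 'M[R]_n :=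
  \matrix_(i < n, j < n) ('C(i, j))%:R.

(* Main.v *)
Require Import Defs.
From mathcomp Require Import all_boot all_order all_algebra.
From mathcomp Require Import zify ring.
Import GRing.Theory.
Set Implicit Arguments. Unset Strict Implicit. Unset Printing Implicit Defensive.
Local Open Scope ring_scope.

Lemma bin_sub2 (i j t : nat) :
  ('C(i, j + t) * 'C(j + t, j) = 'C(i, j) * 'C(i - j, t))%N.
Proof.
case: (leqP (j + t) i) => h; last first.
  rewrite bin_small // mul0n.
  case: (leqP j i) => hj; last by rewrite bin_small.
  rewrite (@bin_small (i - j) t) ?muln0 //; lia.
have hj : (j <= i)%N by lia.
have ht : (t <= i - j)%N by lia.
have e1 := bin_fact (leq_addr t j).
have e2 := bin_fact h.
have e3 := bin_fact hj.
have e4 := bin_fact ht.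
rewrite addKn in e1.
have e5 : (i - (j + t) = i - j - t)%N by lia.
rewrite e5 in e2.
have pa := fact_gt0 j. have pb := fact_gt0 t. have pc := fact_gt0 (i - j - t).
have hp : (0 < j`! * t`! * (i - j - t)`!)%N by rewrite !muln_gt0 pa pb pc.
apply/eqP; rewrite -(eqn_pmul2r hp).
apply/eqP.
transitivity ('C(i, j + t) * (('C(j + t, j) * (j`! * t`!)) * (i - j - t)`!))%N.
  by rewrite !mulnA.
rewrite e1 -mulnA e2.
transitivity ('C(i, j) * (j`! * ('C(i - j, t) * (t`! * (i - j - t)`!))))%N.
  by rewrite e4 e3.
rewrite !mulnA; congr (_ * _)%N; rewrite -!mulnA; congr (_ * _)%N.
by rewrite mulnCA.
Qed.

Section PolyCong.
Variable R : comNzRingType.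
Variable N : nat.
Definition eqN (A B : {poly R}) := forall i, (i < N)%N -> A`_i = B`_i.

Lemma eqN_refl A : eqN A A. Proof. by []. Qed.
Lemma eqN_sym A B : eqN A B -> eqN B A. Proof. by move=> h i hi; rewrite h. Qed.
Lemma eqN_trans A B C : eqN A B -> eqN B C -> eqN A C.
Proof. by move=> h1 h2 i hi; rewrite h1 ?h2. Qed.
Lemma eqN_mull C A B : eqN A B -> eqN (C * A) (C * B).
Proof.
move=> h i hi; rewrite !coefM; apply: eq_bigr => j _; rewrite h //.
exact: leq_ltn_trans (leq_subr j i) hi.
Qed.
Lemma eqN_mulr C A B : eqN A B -> eqN (A * C) (B * C).
Proof. by move=> h; rewrite ![_ * C]mulrC; apply: eqN_mull. Qed.

Variable Q : {poly R}.
Let G := 'X * Q.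

Lemma coefGpow j P i : (i < j)%N -> (G ^+ j * P)`_i = 0.
Proof.
move=> h; rewrite /G exprMn -mulrA coefXnM h //.
Qed.

Lemma eqN_uniq A X Y : eqN X (A + G * X) -> eqN Y (A + G * Y) -> eqN X Y.
Proof.
move=> hX hY.
have hD : eqN (X - Y) (G * (X - Y)).
  move=> i hi; rewrite coefB hX // hY // mulrBr coefB !coefD; ring.
have hT : forall t, eqN (X - Y) (G ^+ t * (X - Y)).
  elim=> [|t IH]; first by rewrite expr0 mul1r.
  apply: eqN_trans hD _; rewrite exprS -mulrA; exact: eqN_mull.
move=> i hi; apply/eqP; rewrite -subr_eq0; apply/eqP.
by rewrite -coefB (hT N i hi) coefGpow.
Qed.

Definition T k := \sum_(i < N.+1) G ^+ i.+1 *+ 'C(i, k).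

Lemma Gbig n i : (N <= n)%N -> (i < N)%N -> (G ^+ n)`_i = 0.
Proof.
move=> h1 h2; rewrite -[G ^+ n]mulr1 coefGpow //; exact: leq_trans h2 h1.
Qed.

Lemma hG n c : G * (G ^+ n *+ c) = G ^+ n.+1 *+ c.
Proof. by rewrite mulrnAr exprS. Qed.

Lemma T_rec k : eqN (T k.+1) (G * T k + G * T k.+1).
Proof.
have -> : G * T k + G * T k.+1 = \sum_(i < N.+1) G ^+ i.+2 *+ 'C(i.+1, k.+1).
  rewrite /T !mulr_sumr -big_split; apply: eq_bigr => i _ /=.
  by rewrite !hG -mulrnDr addnC -binS.
rewrite /T big_ord_recl big_ord_recr /= bin0n mulr0n add0r.
move=> i hi; rewrite coefD coefMn (@Gbig N.+2 i) ?leqW // mul0rn addr0.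
by congr (_`_i); apply: eq_bigr => j _; rewrite /bump leq0n add1n.
Qed.

Lemma T0_rec : eqN (T 0) (G + G * T 0).
Proof.
have -> : G * T 0 = \sum_(i < N.+1) G ^+ i.+2.
  rewrite /T !mulr_sumr; apply: eq_bigr => i _ /=.
  by rewrite hG bin0.
rewrite /T big_ord_recl big_ord_recr /= !bin0 !mulr1n expr1.
move=> i hi; rewrite !coefD (@Gbig N.+2 i) ?leqW // addr0.
by congr (_ + _`_i); apply: eq_bigr => j _; rewrite !bin0 /bump leq0n add1n.
Qed.

Lemma H_pow H : eqN H (G + G * H) -> forall k, eqN (H ^+ k.+1) (T k).
Proof.
move=> hH; elim=> [|k IH].
  rewrite expr1; apply: eqN_uniq hH T0_rec.
rewrite exprS.
refine (eqN_trans (eqN_mull H IH) _).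
apply: eqN_sym; apply: (@eqN_uniq (G * T k)); first exact: T_rec.
refine (eqN_trans (eqN_mulr (T k) hH) _).
have -> : (G + G * H) * T k = G * T k + G * (H * T k) by ring.
exact: eqN_refl.
Qed.

End PolyCong.

Section Conn.
Variable R : comNzRingType.
Implicit Types g : nat -> R.

Definition Pg (g : nat -> R) N : {poly R} := 'X * \poly_(i < N) g i.+1.

Lemma coefPg g N i : (i < N)%N -> (Pg g N)`_i = if i == 0%N then 0 else g i.
Proof.
rewrite /Pg coefXM coef_poly; case: i => //= i hi.
by rewrite (ltnW hi).
Qed.

Lemma cnum_lt g n k : (n < k)%N -> cnum g n k = 0.
Proof. by case: k => // k h /=; rewrite leqNgt h. Qed.

Lemma cnum_full g n k :
  cnum g n k.+1 = \sum_(1 <= i < n.+1) g i * cnum g (n - i) k.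
Proof.
rewrite /=; case: (leqP k.+1 n) => h.
  have e1 : (1 <= (n - k.+1).+2)%N by [].
  have e2 : ((n - k.+1).+2 <= n.+1)%N by lia.
  rewrite (big_cat_nat e1 e2) /=.
  rewrite [X in _ = _ + X]big_nat_cond [X in _ = _ + X]big1 ?addr0 //.
  move=> i /andP[/andP[h1 h2] _]; rewrite cnum_lt ?mulr0 //; lia.
rewrite big_nat_cond big1 //.
move=> i /andP[/andP[h1 h2] _]; rewrite cnum_lt ?mulr0 //; lia.
Qed.

Lemma coefPg_pow g N k n : (n < N)%N -> ((Pg g N) ^+ k)`_n = cnum g n k.
Proof.
elim: k n => [|k IH] n hn.
  by rewrite expr0 coef1 /=; case: n hn.
rewrite exprS coefM cnum_full big_add1 /= big_mkord big_ord_recl coefPg; last exact: leq_ltn_trans (leq0n n) hn.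
rewrite /= mul0r add0r.
apply: eq_bigr => i _; have hi := ltn_ord i.
rewrite /= /bump leq0n add1n coefPg; last lia.
rewrite IH //; lia.
Qed.

Lemma invert_fuel g : forall N M n, (0 < n)%N -> (n <= N)%N -> (n <= M)%N ->
  invert_aux g N n = invert_aux g M n.
Proof.
elim=> [|N IH] [|M] n h0 h1 h2; try lia.
rewrite /=; congr (_ + _); apply: eq_big_nat => i /andP[i1 i2].
congr (_ * _); apply: IH; lia.
Qed.

Lemma Ph_rec g N : eqN N (Pg (invert g) N) (Pg g N + Pg g N * Pg (invert g) N).
Proof.
move=> i hi; rewrite coefD coefM !coefPg //.
case: i hi => [|i] hi /=.
  by rewrite big_ord1 !coefPg //= mul0r addr0.
rewrite /invert /=; congr (_ + _).
rewrite big_add1 /= big_mkord big_ord_recl coefPg; last exact: leq_ltn_trans (leq0n i.+1) hi.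
rewrite /= mul0r add0r.
rewrite big_ord_recr /= subnn [X in _ * X]coefPg; last lia.
rewrite /= mulr0 addr0.
apply: eq_bigr => j _; have hj := ltn_ord j.
rewrite /bump leq0n add1n !coefPg; [|lia|lia].
have -> : ((i.+1 - j.+1)%N == 0%N) = false by lia.
congr (_ * _); apply: invert_fuel; lia.
Qed.

Lemma cnum_invert g n k :
  cnum (invert g) n k.+1 = \sum_(i < n.+2) cnum g n i.+1 *+ 'C(i, k).
Proof.
rewrite -(@coefPg_pow (invert g) n.+1 k.+1 n) //.
rewrite (H_pow (@Ph_rec g n.+1) k (ltnSn n)) /T coef_sum.
by apply: eq_bigr => i _; rewrite coefMn coefPg_pow.
Qed.

End Conn.

Section Mat.
Variable R : comNzRingType.

Lemma sum_trunc (F : nat -> R) p q : (p <= q)%N ->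
  (forall l, (p <= l)%N -> (l < q)%N -> F l = 0) ->
  \sum_(l < q) F l = \sum_(l < p) F l.
Proof.
move=> hpq hF; rewrite [RHS](big_ord_widen _ F hpq) [RHS]big_mkcond.
apply: eq_bigr => l _; case: ifP => // /negbT; rewrite -leqNgt => h.
by rewrite hF.
Qed.

Lemma Lpow n a (i j : 'I_n) :
  (Lmat R n ^+ a) i j = (a%:R) ^+ (i - j) * ('C(i, j))%:R.
Proof.
elim: a i j => [|a IH] i j.
  rewrite expr0 mxE.
  case: (ltngtP i j) => h.
  - have hne : i != j by apply/eqP=> e; move: h; rewrite e ltnn.
    by rewrite bin_small // mulr0 (negbTE hne).
  - have hne : i != j by apply/eqP=> e; move: h; rewrite e ltnn.
    rewrite expr0n; have -> : ((i - j)%N == 0%N) = false by lia.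
    by rewrite mul0r (negbTE hne).
  - by rewrite (ord_inj h) eqxx subnn expr0 binn mul1r.
rewrite exprSr -mulmxE mxE.
under eq_bigr => l _ do rewrite IH mxE.
have hi := ltn_ord i.
rewrite (@sum_trunc (fun l => a%:R ^+ (i - l) * ('C(i, l))%:R * ('C(l, j))%:R) i.+1) //; last first.
  by move=> l h1 h2; rewrite bin_small // mulr0 mul0r.
rewrite -(big_mkord xpredT (fun l => a%:R ^+ (i - l) * ('C(i, l))%:R * ('C(l, j))%:R)).
case: (leqP j i) => hji; last first.
  rewrite bin_small // mulr0 big_nat_cond big1 // => l /andP[/andP[_ h] _].
  by rewrite (@bin_small l j) ?mulr0 //; lia.
have e0 : (0 <= j)%N by [].
have e1 : (j <= i.+1)%N by lia.
rewrite (big_cat_nat e0 e1) /= [X in X + _]big_nat_cond [X in X + _]big1 ?add0r; last first.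
  by move=> l /andP[/andP[_ h] _]; rewrite (@bin_small l j) ?mulr0.
rewrite -{1}(add0n j) big_addn big_mkord.
have -> : (a.+1)%:R = a%:R + 1 :> R by rewrite -addn1 natrD.
rewrite exprDn mulr_suml.
have -> : (i.+1 - j = (i - j).+1)%N by lia.
apply: eq_bigr => t _.
rewrite expr1n mulr1 -mulr_natr.
have -> : (i - (t + j) = i - j - t)%N by lia.
rewrite -mulrA -natrM addnC bin_sub2 natrM; ring.
Qed.

End Mat.

Lemma c_mS (R : comNzRingType) (f0 : nat -> R) a :
  c_m f0 a.+1 = cnum (fiter f0 a).
Proof. by rewrite /c_m subn1. Qed.

Lemma Cstep (R : comNzRingType) (f0 : nat -> R) a n :
  Cmat f0 a.+2 n = Cmat f0 a.+1 n *m Lmat R n.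
Proof.
apply/matrixP => i j; rewrite !mxE !c_mS.
set g := fiter f0 a.
have -> : fiter f0 a.+1 = invert g by [].
under eq_bigr => l _ do rewrite !mxE c_mS -/g.
have hi := ltn_ord i.
rewrite (@sum_trunc _ (fun l => (if (l <= i)%N then cnum g i.+1 l.+1 else 0) * ('C(l, j))%:R) i.+1) //; last first.
  by move=> l h1 h2; case: leqP => h; [lia | rewrite mul0r].
under eq_bigr => l _ do rewrite (leq_ord l) mulr_natr.
case: (leqP j i) => hji; last first.
  symmetry; apply: big1 => l _.
  by rewrite bin_small ?mulr0n //; exact: leq_trans (ltn_ord l) hji.
rewrite cnum_invert.
rewrite (@sum_trunc _ (fun l => cnum g i.+1 l.+1 *+ 'C(l, j)) i.+1); [by [] | lia | ].
move=> l h1 h2; rewrite cnum_lt ?mul0rn //.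
Qed.

Lemma Cpow (R : comNzRingType) (f0 : nat -> R) a n :
  Cmat f0 a.+1 n = Cmat f0 1 n *m Lmat R n ^+ a.
Proof.
elim: a => [|a IH]; first by rewrite expr0 mulmx1.
by rewrite Cstep IH !mulmxE exprSr mulrA.
Qed.

Theorem proposition9 (R : comNzRingType) (f0 : nat -> R) (m n : nat)
    (hm : (1 <= m)%N) (hn : (1 <= n)%N) :
  Cmat f0 m n = Cmat f0 1 n *m (Lmat R n) ^+ (m - 1)
  /\ (forall k : nat, (1 <= k <= n)%N ->
        c_m f0 m n k =
        \sum_(k <= i < n.+1)
           ((m - 1)%:R ^+ (i - k) * ('C(i - 1, k - 1))%:R * c_m f0 1 n i)).
Proof.
case: m hm => // a _; rewrite subn1 /=.
split; first exact: Cpow.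
case: n hn => // n _ [|k] // /andP[_ hk].
have := congr1 (fun M : 'M[R]_n.+1 => M (Ordinal (ltnSn n)) (Ordinal hk)) (Cpow f0 a n.+1).
rewrite /= !mxE /= -ltnS hk => ->.
under eq_bigr => l _ do rewrite !mxE Lpow /= -ltnS (ltn_ord l).
rewrite big_add1 /=.
under eq_big_nat => i hi do rewrite subSS !subn1 /=.
rewrite -(big_mkord xpredT (fun l => c_m f0 1 n.+1 l.+1 * (a%:R ^+ (l - k) * ('C(l, k))%:R))).
have e0 : (0 <= k)%N by [].
have e1 : (k <= n.+1)%N by lia.
rewrite (big_cat_nat e0 e1) /= [X in X + _ = _]big_nat_cond [X in X + _ = _]big1 ?add0r; last first.
  by move=> l /andP[/andP[_ h] _]; rewrite (@bin_small l k) ?mulr0.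
by apply: eq_big_nat => i hi; rewrite mulrC.
Qed.
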